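(* Let $\{X_n;n\ge1\}$ be a sequence of independent random variables in a sub-linear expectation space $(\Omega,\mathscr H,\hat{\mathbb E})$ with $\hat{\mathbb E}[X_k^2]<\infty$ and $\hat{\mathbb E}[X_k]\le0$ for all $k$. Let $S_n=\sum_{k=1}^nX_k$, $V_n^2=\sum_{k=1}^nX_k^2$, $\overline B_n^2=\sum_{k=1}^n\hat{\mathbb E}[X_k^2]$, $\underline B_n^2=\sum_{k=1}^n\hat{\mathcal E}[X_k^2]>0$, $q_n=\overline B_n^2/\underline B_n^2$ and $\Delta_{n,x}=\overline B_n^{-2}\sum_{k=1}^n\hat{\mathbb E}[X_k^2(1\wedge|xX_k/\overline B_n|)]$. Let $0<\delta\le\frac14\underline B_n^2/\overline B_n^2$. Then there is an absolute constant $C$ such that for all $x\ge2$, $$\mathbb V\big(S_n\ge xV_n,\ V_n^2\le\delta\overline B_n^2\big)\le\exp\{-2x^2+Cx^2q_n^3\Delta_{n,x}\}.$$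
   Context: Sub-linear expectation space: $\mathscr H$ is a linear space of real functions on a measurable space $(\Omega,\mathcal F)$, closed under $\varphi(X_1,\dots,X_n)$ for $\varphi$ bounded continuous or locally Lipschitz with polynomial growth; $\hat{\mathbb E}:\mathscr H\to[-\infty,\infty]$ is monotone, constant preserving, sub-additive and positively homogeneous. $\hat{\mathcal E}[X]=-\hat{\mathbb E}[-X]$; $\mathbb V(A)=\inf\{\hat{\mathbb E}[\xi]:I_A\le\xi,\xi\in\mathscr H\}$. Independence: $\mathbf Y$ is independent of $\mathbf X$ if $\hat{\mathbb E}[\varphi(\mathbf X,\mathbf Y)]=\hat{\mathbb E}[\hat{\mathbb E}[\varphi(\mathbf x,\mathbf Y)]|_{\mathbf x=\mathbf X}]$ for all locally Lipschitz $\varphi$ of polynomial growth (whenever the relevant expectations are finite); $\{X_n\}$ is independent if $X_{i+1}$ is independent of $(X_1,\dots,X_i)$ for each $i$. $a\wedge b=\min(a,b)$. *)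

(* Defs.v *)
From HB Require Import structures.
From mathcomp Require Import all_boot all_order all_algebra.
From mathcomp Require Import all_classical all_reals all_analysis.
Set Implicit Arguments. Unset Strict Implicit. Unset Printing Implicit Defensive.
Import Order.TTheory GRing.Theory Num.Theory.
Import numFieldNormedType.Exports.
Local Open Scope classical_set_scope.
Local Open Scope ring_scope.

(* Test functions on R^n (row vectors, with the library's max norm). *)
Definition bounded_continuous (R : realType) (n : nat) (phi : 'rV[R]_n -> R) :=
  continuous phi /\ exists M : R, forall x, `|phi x| <= M.

Definition loc_lip_poly (R : realType) (n : nat) (phi : 'rV[R]_n -> R) :=
  exists (C : R) (m : nat), forall x y,
    `|phi x - phi y| <= C * (1 + `|x| ^+ m + `|y| ^+ m) * `|x - y|.

Definition compose_rv (R : realType) (Omega : Type) (n : nat)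
  (phi : 'rV[R]_n -> R) (Xs : 'I_n -> Omega -> R) : Omega -> R :=
  fun w => phi (\row_i Xs i w).

Record sublinear_space (R : realType) (Omega : Type) := SublinearSpace {
  sl_H : set (Omega -> R);
  sl_E : (Omega -> R) -> \bar R;
  sl_H0 : sl_H (fun _ => 0);
  sl_HD : forall X Y, sl_H X -> sl_H Y -> sl_H (fun w => X w + Y w);
  sl_HZ : forall (a : R) X, sl_H X -> sl_H (fun w => a * X w);
  sl_Hcomp : forall (n : nat) (phi : 'rV[R]_n -> R) (Xs : 'I_n -> Omega -> R),
      (forall i, sl_H (Xs i)) ->
      (bounded_continuous phi \/ loc_lip_poly phi) ->
      sl_H (compose_rv phi Xs);
  sl_mono : forall X Y, sl_H X -> sl_H Y -> (forall w, X w <= Y w) ->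
      (sl_E X <= sl_E Y)%E;
  sl_cst : forall c : R, sl_E (fun _ => c) = c%:E;
  sl_subadd : forall X Y, sl_H X -> sl_H Y ->
      ~ (sl_E X = +oo%E /\ sl_E Y = -oo%E) ->
      ~ (sl_E X = -oo%E /\ sl_E Y = +oo%E) ->
      (sl_E (fun w => (X w + Y w)%R) <= sl_E X + sl_E Y)%E;
  sl_homog : forall (l : R) X, sl_H X -> 0 < l ->
      sl_E (fun w => l * X w) = (l%:E * sl_E X)%E
}.

Definition lower_E (R : realType) (Omega : Type) (S : sublinear_space R Omega)
  (X : Omega -> R) : \bar R := (- sl_E S (fun w => (- X w)%R))%E.

Definition capV (R : realType) (Omega : Type) (S : sublinear_space R Omega)
  (A : set Omega) : \bar R :=
  ereal_inf [set sl_E S xi | xi in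
     [set xi | sl_H S xi /\ forall w, (\1_A w : R) <= xi w]].

Definition independent_of (R : realType) (Omega : Type)
  (S : sublinear_space R Omega) (m : nat)
  (Xs : 'I_m -> Omega -> R) (Y : Omega -> R) :=
  forall phi : 'rV[R]_(m + 1) -> R, loc_lip_poly phi ->
    let psi := fun x : 'rV[R]_m =>
      sl_E S (fun w => phi (row_mx x (\row_(j < 1) Y w))) in
    (forall x, psi x \is a fin_num) ->
    sl_E S (fun w => fine (psi (\row_i Xs i w))) \is a fin_num ->
    sl_E S (fun w => phi (row_mx (\row_i Xs i w) (\row_(j < 1) Y w)))
      = sl_E S (fun w => fine (psi (\row_i Xs i w))).

Definition indep_seq (R : realType) (Omega : Type)
  (S : sublinear_space R Omega) (X : nat -> Omega -> R) :=
  forall i : nat, (1 <= i)%N ->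
    independent_of S (fun j : 'I_i => X j.+1) (X i.+1).

(* Main.v *)
Require Import Defs.
From HB Require Import structures.
From mathcomp Require Import all_boot all_order all_algebra.
From mathcomp Require Import all_classical all_reals all_analysis.
From mathcomp Require Import ring lra.
Import Order.TTheory GRing.Theory Num.Theory.
Import numFieldNormedType.Exports.
Local Open Scope classical_set_scope.
Local Open Scope ring_scope.

Section ExpB.
Variable R : realType.

Lemma mvt_ge (G dG : R -> R) (a b : R) : a <= b ->
  (forall x : R, is_derive x (1:R) G (dG x)) ->
  (forall c, a <= c <= b -> 0 <= dG c) -> G a <= G b.
Proof.
move=> ab hd hpos.
have [|c cab E] := MVT_segment ab (fun x _ => hd x).
  apply: derivable_within_continuous => z _.
  exact: ex_derive.
rewrite -subr_ge0 E mulr_ge0 ?subr_ge0 //; apply: hpos.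
by move: cab; rewrite in_itv.
Qed.

Lemma exp_le_neg (t : R) : t <= 0 -> expR t <= 1 + t + t ^+ 2 / 2.
Proof.
move=> t0.
have := @mvt_ge (fun s : R => expR s - (1 + s + s ^+ 2 / 2)) (fun s => expR s - (1 + s)) t 0 t0.
rewrite expR0 expr0n /= mul0r !addr0 subrr.
move=> H; rewrite -subr_le0; apply: H.
- move=> x; apply: is_derive_eq.
  rewrite !scaler0 !add0r /GRing.scale /= mulr1; by field.
- move=> c _; rewrite subr_ge0; exact: expR_ge1Dx.
Qed.

Lemma exp_le_inv (t : R) : t < 1 -> expR t <= (1 - t)^-1.
Proof.
move=> t1.
have -> : expR t = (expR (- t))^-1 by rewrite expRN invrK.
have p : 0 < 1 - t by rewrite subr_gt0.
rewrite lef_pV2 ?posrE ?expR_gt0 //.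
exact: expR_ge1Dx.
Qed.

Lemma exp_le_pos (t : R) : 0 <= t -> t <= 1/4 -> expR t <= 1 + t + t ^+ 2 / 2 + t ^+ 3.
Proof.
move=> t0 t14.
have := @mvt_ge (fun s : R => (1 + s + s ^+ 2 / 2 + s ^+ 3) - expR s) (fun s => (1 + s + 3 * s ^+ 2) - expR s) 0 t t0.
rewrite expR0 !expr0n /= mul0r !addr0 subrr.
move=> H; rewrite -subr_ge0; apply: H.
- move=> x; apply: is_derive_eq.
  rewrite !scaler0 !add0r /GRing.scale /= !mulr1; by field.
- move=> c /andP[c0 ct].
  have c1 : c < 1 by apply: (le_lt_trans ct); apply: (le_lt_trans t14); lra.
  rewrite subr_ge0; apply: le_trans; first exact: (exp_le_inv c c1).
  have p : 0 < 1 - c by rewrite subr_gt0.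
  rewrite -[(1 - c)^-1]mul1r ler_pdivrMr //.
  have c14 : c <= 1/4 by apply: le_trans t14.
  nra.
Qed.

Lemma exp_le_quarter (t : R) : t <= 1/4 -> expR t <= 4/3.
Proof.
move=> t14.
have t1 : t < 1 by apply: (le_lt_trans t14); lra.
apply: le_trans; first exact: (exp_le_inv t t1).
have p : 0 < 1 - t by apply: (@lt_le_trans _ _ (1 - 1/4)); lra.
rewrite -[(1 - t)^-1]mul1r ler_pdivrMr //; nra.
Qed.

Lemma key_bound (v : R) :
  expR (v - v ^+ 2) <= 1 + v - v ^+ 2 / 2 + 10 * (v ^+ 2 * Num.min 1 `|v|).
Proof.
have t14 : v - v ^+ 2 <= 1/4 by have := sqr_ge0 (v - 1/2); nra.
have [v1|v1] := leP `|v| 1.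

  have [t0|t0] := leP (v - v ^+ 2) 0.
    apply: le_trans; first exact: exp_le_neg t0.
    have [v0|v0] := leP 0 v.
      rewrite ger0_norm //; rewrite ger0_norm // in v1.
      have h : 0 <= (v * v * v) * (1 - v) by rewrite mulr_ge0 ?subr_ge0 ?mulr_ge0.
      rewrite !expr2; nra.
    rewrite ltr0_norm //; move: v1; rewrite ltr0_norm // => v1.
    have h : 0 <= ((- v) * v ^+ 2) * (1 + v).
      apply: mulr_ge0; [apply: mulr_ge0; [rewrite oppr_ge0 ltW // | exact: sqr_ge0] | lra].
    rewrite !expr2; nra.
  apply: le_trans; first exact: exp_le_pos (ltW t0) t14.
  have v0 : 0 <= v by nra.
  rewrite ger0_norm //; rewrite ger0_norm // in v1.
  have tv : v - v ^+ 2 <= v by nra.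
  have h3 : (v - v ^+ 2) ^+ 3 <= v ^+ 3.
    by apply: lerXn2r; rewrite ?nnegrE ?(ltW t0) //; nra.
  have h : 0 <= (v * v * v) * (1 - v) by rewrite mulr_ge0 ?subr_ge0 ?mulr_ge0.
  move: h3; rewrite !exprS !expr0 !mulr1 => h3; nra.

apply: le_trans; first exact: exp_le_quarter t14.
have [v0|v0] := leP 0 v.
  rewrite ger0_norm // in v1; nra.
rewrite ltr0_norm // in v1; nra.
Qed.

End ExpB.

Set Implicit Arguments. Unset Strict Implicit.
Section SL.
Variables (R : realType) (Omega : Type) (S : sublinear_space R Omega).

Lemma entry_le n (z : 'rV[R]_n) j : `|z 0 j| <= `|z|.
Proof.
rewrite [X in _ <= X]mx_normrE.
exact: (le_bigmax _ (fun ij : 'I_1 * 'I_n => `|z ij.1 ij.2|) (0, j)).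
Qed.
Arguments entry_le {n}.

Lemma H_comp1 (f : R -> R) (C : R) (m : nat) (X : Omega -> R) : 0 <= C ->
  (forall a b, `|f a - f b| <= C * (1 + `|a| ^+ m + `|b| ^+ m) * `|a - b|) ->
  sl_H S X -> sl_H S (fun w => f (X w)).
Proof.
move=> C0 hf hX.
have -> : (fun w => f (X w)) = compose_rv (fun z : 'rV[R]_1 => f (z 0 0)) (fun _ => X).
  by apply/funext => w; rewrite /compose_rv mxE.
apply: sl_Hcomp => //; right; exists C, m => x y.
apply: le_trans; first exact: hf.
have e : `|x 0 0 - y 0 0| <= `|x - y|.
  by have := entry_le (x - y) 0; rewrite !mxE.
have p1 : 0 <= 1 + `|x 0 0| ^+ m + `|y 0 0| ^+ m.
  by rewrite !addr_ge0 ?exprn_ge0.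
apply: ler_pM => //; first by rewrite mulr_ge0.
apply: ler_wpM2l => //; apply: lerD; first apply: lerD => //.
  by apply: lerXn2r; rewrite ?nnegrE ?entry_le.
by apply: lerXn2r; rewrite ?nnegrE ?entry_le.
Qed.

Lemma H_cst (c : R) : sl_H S (fun _ => c).
Proof.
apply: (@H_comp1 (fun _ => c) 0 0 (fun _ => 0)) => //; last exact: sl_H0.
by move=> a b; rewrite subrr normr0 !mul0r.
Qed.

Lemma prod_bnd (I : Type) (s : seq I) (phi : R -> R) (M : R) (a : I -> R) :
  (forall y, 0 <= phi y <= M) ->
  0 <= \prod_(i <- s) phi (a i) <= M ^+ size s.
Proof.
move=> hp; elim: s => [|i s IH]; first by rewrite big_nil expr0 lexx ler01.
rewrite big_cons /= exprS; case/andP: IH => h1 h2; case/andP: (hp (a i)) => h3 h4.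
by rewrite mulr_ge0 //= ler_pM.
Qed.

Lemma prod_diff (I : Type) (s : seq I) (phi : R -> R) (M : R) (a b : I -> R) :
  1 <= M -> (forall y, 0 <= phi y <= M) ->
  `|\prod_(i <- s) phi (a i) - \prod_(i <- s) phi (b i)| <=
     M ^+ size s * \sum_(i <- s) `|phi (a i) - phi (b i)|.
Proof.
move=> M1 hp; elim: s => [|i s IH]; first by rewrite !big_nil subrr normr0 mulr0.
rewrite !big_cons /=.
set A := \prod_(j <- s) phi (a j); set B := \prod_(j <- s) phi (b j).
set D := \sum_(j <- s) _.
have [hA1 hA2] := andP (@prod_bnd _ s phi M a hp).
have [hB1 hB2] := andP (@prod_bnd _ s phi M b hp).
have [h1 h2] := andP (hp (a i)); have [h3 h4] := andP (hp (b i)).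
have -> : phi (a i) * A - phi (b i) * B = phi (a i) * (A - B) + (phi (a i) - phi (b i)) * B by ring.
apply: le_trans; first exact: ler_normD.
rewrite !normrM (ger0_norm h1) (ger0_norm hB1).
have M0 : 0 <= M by apply: le_trans M1.
have hk : M ^+ size s <= M ^+ (size s).+1 by rewrite exprS ler_peMl // exprn_ge0.
have hD : 0 <= D by rewrite sumr_ge0.
have e1 : phi (a i) * `|A - B| <= M * (M ^+ size s * D).
  by apply: ler_pM => //; rewrite normr_ge0.
have e2 : `|phi (a i) - phi (b i)| * B <= `|phi (a i) - phi (b i)| * (M * M ^+ size s).
  by apply: ler_wpM2l => //; rewrite -exprS; apply: le_trans hk.
rewrite exprS.
have -> : M * M ^+ size s * (`|phi (a i) - phi (b i)| + D) = M * (M ^+ size s * D) + `|phi (a i) - phi (b i)| * (M * M ^+ size s) by ring.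
exact: lerD e1 e2.
Qed.

Lemma lip_prod (phi : R -> R) (M L : R) p : 1 <= M -> 0 <= L ->
  (forall y, 0 <= phi y <= M) ->
  (forall a b, `|phi a - phi b| <= L * (1 + `|a| + `|b|) * `|a - b|) ->
  loc_lip_poly (fun z : 'rV[R]_p => \prod_(j < p) phi (z 0 j)).
Proof.
move=> M1 L0 hp hl; exists (M ^+ p * p%:R * L), 1%N => x y.
apply: le_trans; first exact: (@prod_diff _ (index_enum 'I_p) phi M (fun j => x 0 j) (fun j => y 0 j) M1 hp).
have -> : size (index_enum 'I_p) = p by rewrite -[index_enum _]enumT size_enum_ord.
rewrite -!mulrA; apply: ler_wpM2l; first by rewrite exprn_ge0 // (le_trans ler01 M1).
apply: le_trans (_ : \sum_(j < p) L * (1 + `|x| ^+ 1 + `|y| ^+ 1) * `|x - y| <= _).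
  apply: ler_sum => j _; rewrite !expr1.
  apply: le_trans; first exact: hl.
  have e : `|x 0 j - y 0 j| <= `|x - y|.
    by have := entry_le (x - y) j; rewrite !mxE.
  apply: ler_pM => //.
    by rewrite mulr_ge0 // !addr_ge0.
  apply: ler_wpM2l => //; apply: lerD; first apply: lerD => //; exact: entry_le.
by rewrite sumr_const card_ord mulr_natl mulrA.
Qed.

Local Notation E := (sl_E S).

Lemma E_bnd (Y : Omega -> R) (a b : R) : sl_H S Y -> (forall w, a <= Y w <= b) ->
  (a%:E <= E Y /\ E Y <= b%:E)%E.
Proof.
move=> hY hb; split.
  rewrite -(sl_cst S a); apply: sl_mono => //; first exact: H_cst.
  by move=> w; case/andP: (hb w).
rewrite -(sl_cst S b); apply: sl_mono => //; first exact: H_cst.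
by move=> w; case/andP: (hb w).
Qed.

Lemma E_bnd_fin (Y : Omega -> R) (a b : R) : sl_H S Y -> (forall w, a <= Y w <= b) ->
  E Y \is a fin_num.
Proof.
move=> hY hb; have [h1 h2] := E_bnd hY hb.
by rewrite fin_numE; apply/andP; split; apply/eqP => h;
  [move: h1; rewrite h | move: h2; rewrite h].
Qed.

Lemma E_scale (Y : Omega -> R) (l : R) : sl_H S Y -> 0 <= l ->
  E (fun w => l * Y w) = (l%:E * E Y)%E.
Proof.
move=> hY; rewrite le_eqVlt => /orP[/eqP <-|l0]; last exact: sl_homog.
rewrite mul0e (_ : (fun w => 0 * Y w) = fun _ => 0); first exact: sl_cst.
by apply/funext => w; rewrite mul0r.
Qed.

Lemma E_subadd_l (X Y : Omega -> R) : sl_H S X -> sl_H S Y -> E X \is a fin_num ->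
  (E (fun w => (X w + Y w)%R) <= E X + E Y)%E.
Proof.
move=> hX hY hf; apply: sl_subadd => // -[h _]; by move: hf; rewrite h.
Qed.

Lemma E_subadd_r (X Y : Omega -> R) : sl_H S X -> sl_H S Y -> E Y \is a fin_num ->
  (E (fun w => (X w + Y w)%R) <= E X + E Y)%E.
Proof.
move=> hX hY hf; apply: sl_subadd => // -[_ h]; by move: hf; rewrite h.
Qed.

Lemma H_add (X Y : Omega -> R) : sl_H S X -> sl_H S Y -> sl_H S (fun w => X w + Y w).
Proof. exact: sl_HD. Qed.

Lemma H_scal (a : R) (X : Omega -> R) : sl_H S X -> sl_H S (fun w => a * X w).
Proof. exact: sl_HZ. Qed.

Lemma H_sq (X : Omega -> R) : sl_H S X -> sl_H S (fun w => X w ^+ 2).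
Proof.
apply: (@H_comp1 (fun a => a ^+ 2) 1 1) => // a b.
rewrite subrXX big_ord_recr big_ord1 /= !subn0 ?expr0 ?expr1 mulr1 mul1r.
rewrite normrM mul1r mulrC ler_wpM2r //.
apply: le_trans; first exact: ler_normD.
by rewrite -addrA lerDr.
Qed.

Lemma sqr_normr (a : R) : `|a| ^+ 2 = a ^+ 2.
Proof. exact: real_normK (num_real a). Qed.

Lemma min1_lip (u v : R) : `|Num.min 1 u - Num.min 1 v| <= `|u - v|.
Proof.
have [hu|hu] := leP u 1; have [hv|hv] := leP v 1.
- by [].
- rewrite (ler0_norm (_ : u - 1 <= 0)); last lra.
  rewrite (ler0_norm (_ : u - v <= 0)); lra.
- rewrite (ger0_norm (_ : 0 <= 1 - v)); last lra.
  rewrite (ger0_norm (_ : 0 <= u - v)); lra.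
- by rewrite subrr normr0.
Qed.

Lemma H_rho (x s : R) (X : Omega -> R) : sl_H S X ->
  sl_H S (fun w => X w ^+ 2 * Num.min 1 `|x * X w / s|).
Proof.
set c := x / s.
apply: (@H_comp1 (fun a => a ^+ 2 * Num.min 1 `|x * a / s|) (1 + `|c|) 2) => // a b.
set ga := Num.min 1 `|x * a / s|; set gb := Num.min 1 `|x * b / s|.
have ga0 : 0 <= ga <= 1.
  rewrite /ga; have [h|h] := leP `|x * a / s| 1; apply/andP; split; by rewrite ?ler01 ?lexx ?h.
have hg : `|ga - gb| <= `|c| * `|a - b|.
  apply: le_trans; first exact: min1_lip.
  apply: le_trans; first exact: ler_dist_dist.
  by rewrite -normrM le_eqVlt; apply/orP; left; apply/eqP; congr `|_|; rewrite /c; ring.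
have hab : `|a ^+ 2 - b ^+ 2| <= (`|a| + `|b|) * `|a - b|.
  rewrite subrXX big_ord_recr big_ord1 /= !subn0 ?expr0 ?expr1 mulr1 mul1r.
  rewrite normrM mulrC ler_wpM2r //.
  exact: ler_normD.
have -> : a ^+ 2 * ga - b ^+ 2 * gb = (a ^+ 2 - b ^+ 2) * ga + b ^+ 2 * (ga - gb) by ring.
apply: le_trans; first exact: ler_normD.
case/andP: ga0 => g0 g1.
have h1 : `|(a ^+ 2 - b ^+ 2) * ga| <= (`|a| + `|b|) * `|a - b|.
  rewrite normrM (ger0_norm g0); apply: le_trans hab.
  rewrite -[X in _ <= X]mulr1; exact: ler_wpM2l.
have h2 : `|b ^+ 2 * (ga - gb)| <= b ^+ 2 * (`|c| * `|a - b|).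
  by rewrite normrM (ger0_norm (sqr_ge0 b)); apply: ler_wpM2l => //; exact: sqr_ge0.
apply: le_trans; first exact: lerD h1 h2.
rewrite !sqr_normr.
have na := normr_ge0 a; have nb := normr_ge0 b; have nc := normr_ge0 c.
have nd := normr_ge0 (a - b).
have ea : `|a| + `|b| <= 1 + a ^+ 2 + b ^+ 2.
  rewrite -(sqr_normr a) -(sqr_normr b).
  have := sqr_ge0 (`|a| - 1/2); have := sqr_ge0 (`|b| - 1/2); nra.
have e1 : (`|a| + `|b|) * `|a - b| <= (1 + a ^+ 2 + b ^+ 2) * `|a - b|.
  exact: ler_wpM2r.
have e2 : b ^+ 2 * (`|c| * `|a - b|) <= `|c| * ((1 + a ^+ 2 + b ^+ 2) * `|a - b|).
  rewrite mulrCA; apply: ler_wpM2l => //; apply: ler_wpM2r => //.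
  have := sqr_ge0 a; lra.
apply: le_trans; first exact: lerD e1 e2.
by rewrite le_eqVlt; apply/orP; left; apply/eqP; ring.
Qed.


End SL.

Set Implicit Arguments. Unset Strict Implicit.
Section Phi.
Variable R : realType.

Lemma exp_lip (s t : R) : s <= 1/4 -> t <= 1/4 -> `|expR s - expR t| <= 4/3 * `|s - t|.
Proof.
wlog st : s t / s <= t.
  move=> H hs ht; have [h|h] := leP s t; first exact: H.
  by rewrite distrC [`|s - t|]distrC; apply: H => //; exact: ltW.
move=> hs ht.
rewrite (ler0_norm (_ : expR s - expR t <= 0)); last by rewrite subr_le0 ler_expR.
rewrite (ler0_norm (_ : s - t <= 0)); last by rewrite subr_le0.
have e : expR s = expR t * expR (s - t) by rewrite -expRD addrC subrK.
have h1 := expR_ge1Dx (s - t).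
have h2 := @exp_le_quarter _ _ ht.
have h3 := expR_gt0 t.
rewrite e.
have -> : - (expR t * expR (s - t) - expR t) = expR t * (1 - expR (s - t)) by ring.
apply: le_trans (_ : expR t * (t - s) <= _).
  by apply: ler_wpM2l; [exact: ltW | lra].
rewrite opprB; apply: ler_wpM2r; by [rewrite subr_ge0 | ].
Qed.

Definition phiL (l y : R) := expR (l * y - l ^+ 2 * y ^+ 2).

Lemma phiL_le (l y : R) : l * y - l ^+ 2 * y ^+ 2 <= 1/4.
Proof. have := sqr_ge0 (l * y - 1/2); rewrite -exprMn; nra. Qed.

Lemma phiL_bnd (l y : R) : 0 <= phiL l y <= 4/3.
Proof. by rewrite /phiL expR_ge0 /= (@exp_le_quarter _) // phiL_le. Qed.

Lemma phiL_lip (l : R) (a b : R) : 0 <= l ->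
  `|phiL l a - phiL l b| <= (4/3 * (l + l ^+ 2)) * (1 + `|a| + `|b|) * `|a - b|.
Proof.
move=> l0.
apply: le_trans; first exact: exp_lip (phiL_le l a) (phiL_le l b).
apply: le_trans (_ : 4/3 * ((l + l ^+ 2) * (1 + `|a| + `|b|) * `|a - b|) <= _); last by rewrite !mulrA.
apply: ler_wpM2l; first lra.
have -> : l * a - l ^+ 2 * a ^+ 2 - (l * b - l ^+ 2 * b ^+ 2) = (a - b) * (l - l ^+ 2 * (a + b)) by ring.
rewrite normrM mulrC; apply: ler_wpM2r => //.
apply: le_trans; first exact: ler_normB.
rewrite normrM (ger0_norm l0) (ger0_norm (sqr_ge0 l)).
have hab : `|a + b| <= `|a| + `|b| := ler_normD a b.
have na := normr_ge0 a; have nb := normr_ge0 b; have l2 := sqr_ge0 l.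
have : l ^+ 2 * `|a + b| <= l ^+ 2 * (`|a| + `|b|) by apply: ler_wpM2l.
nra.
Qed.

End Phi.

Set Implicit Arguments. Unset Strict Implicit.
Section PB.
Variables (R : realType) (Omega : Type) (S : sublinear_space R Omega).
Local Notation E := (sl_E S).

Lemma E_ge0 (Y : Omega -> R) : sl_H S Y -> (forall w, 0 <= Y w) -> (0 <= E Y)%E.
Proof.
move=> hY h; have <- : E (fun _ => 0) = 0%E by exact: sl_cst.
apply: sl_mono => //; exact: H_cst.
Qed.

Lemma E_le0 (Y : Omega -> R) : sl_H S Y -> (forall w, Y w <= 0) -> (E Y <= 0)%E.
Proof.
move=> hY h; have <- : E (fun _ => 0) = 0%E by exact: sl_cst.
apply: sl_mono => //; exact: H_cst.
Qed.

Lemma H_neg (Y : Omega -> R) : sl_H S Y -> sl_H S (fun w => - Y w).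
Proof.
move=> h; have := H_scal (-1) h.
by rewrite (_ : (fun w => -1 * Y w) = (fun w => - Y w)) // ; apply/funext => w; rewrite mulN1r.
Qed.

Lemma fin_sq (Y : Omega -> R) : sl_H S Y -> (E (fun w => (Y w ^+ 2)%R) < +oo)%E ->
  E (fun w => Y w ^+ 2) \is a fin_num.
Proof.
move=> hY h; rewrite ge0_fin_numE //; apply: E_ge0; first exact: H_sq.
by move=> w; exact: sqr_ge0.
Qed.

Lemma fin_negsq (Y : Omega -> R) : sl_H S Y -> (E (fun w => (Y w ^+ 2)%R) < +oo)%E ->
  E (fun w => - (Y w ^+ 2)) \is a fin_num /\
  (0 <= fine (E (fun w => Y w ^+ 2)) + fine (E (fun w => - (Y w ^+ 2))))%R.
Proof.
move=> hY h.
have f2 := fin_sq hY h.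
have h2 := H_sq hY; have hn := H_neg h2.
have hle := E_subadd_l h2 hn f2.
have e0 : E (fun w => (Y w ^+ 2 + - (Y w ^+ 2))%R) = 0%E.
  rewrite (_ : (fun w => _) = fun _ => 0); first exact: sl_cst.
  by apply/funext => w; rewrite subrr.
rewrite e0 in hle.
have hup : (E (fun w => (- (Y w ^+ 2))%R) <= 0)%E.
  by apply: E_le0 => // w; rewrite oppr_le0 sqr_ge0.
have fn : E (fun w => - (Y w ^+ 2)) \is a fin_num.
  rewrite fin_numE; apply/andP; split; apply/eqP => e.
    by move: hle; rewrite e -(fineK f2) /=.
  by move: hup; rewrite e.
split => //.
by rewrite -lee_fin EFinD !fineK.
Qed.

Lemma H_phiL (l : R) (Y : Omega -> R) : 0 <= l -> sl_H S Y -> sl_H S (fun w => phiL l (Y w)).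
Proof.
move=> l0 hY; apply: (@H_comp1 _ _ S (phiL l) (4/3 * (l + l ^+ 2)) 1) => //.
  by apply: mulr_ge0; [lra | apply: addr_ge0 => //; exact: sqr_ge0].
by move=> a b; rewrite !expr1; exact: phiL_lip.
Qed.

Lemma per_bound (Y : Omega -> R) (l x s q : R) :
  sl_H S Y -> (E (fun w => (Y w ^+ 2)%R) < +oo)%E -> (E Y <= 0)%E -> 0 < l -> 0 <= q ->
  (forall a : R, Num.min 1 `|l * a| <= 2 * q * Num.min 1 `|x * a / s|) ->
  fine (E (fun w => phiL l (Y w))) <=
    1 - l ^+ 2 / 2 * fine (lower_E S (fun w => (Y w ^+ 2)%R))
      + 20 * q * l ^+ 2 * fine (E (fun w => (Y w ^+ 2 * Num.min 1 `|x * Y w / s|)%R)).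
Proof.
move=> hY hsq hE l0 q0 hmin.
set c := 20 * q * l ^+ 2.
have c0 : 0 <= c by rewrite /c !mulr_ge0 // ?sqr_ge0; lra.
set rho := fun w => (Y w ^+ 2 * Num.min 1 `|x * Y w / s|)%R.
have hr : sl_H S rho by exact: H_rho.
have h2 := H_sq hY.
have hn := H_neg h2.
have f2 := fin_sq hY hsq.
have [fn _] := fin_negsq hY hsq.
have fr : E rho \is a fin_num.
  rewrite ge0_fin_numE; last by apply: E_ge0 => // w; rewrite /rho mulr_ge0 ?sqr_ge0 //; have [h|h] := leP `|x * Y w / s| 1 => //.
  apply: le_lt_trans hsq; apply: sl_mono => // w.
  rewrite /rho -[X in _ <= X]mulr1; apply: ler_wpM2l; first exact: sqr_ge0.
  by have [h|h] := leP `|x * Y w / s| 1.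
have hphi := H_phiL (ltW l0) hY.
have fphi : E (fun w => phiL l (Y w)) \is a fin_num.
  by apply: (@E_bnd_fin _ _ S _ 0 (4/3)) => // w; exact: phiL_bnd.
pose W := fun w => (l ^+ 2 / 2 * (- (Y w ^+ 2)) + c * rho w)%R.
pose Z := fun w => (1 + W w)%R.
have hW : sl_H S W by apply: H_add; apply: H_scal.
have hZ : sl_H S Z by apply: H_add => //; exact: H_cst.
have hlY : sl_H S (fun w => l * Y w) by exact: H_scal.
have pw : forall w, phiL l (Y w) <= l * Y w + Z w.
  move=> w; rewrite /Z /W /rho /phiL.
  have := @key_bound R (l * Y w); rewrite exprMn => kb.
  apply: le_trans kb _.
  have hm := hmin (Y w).
  have : 10 * (l ^+ 2 * Y w ^+ 2 * Num.min 1 `|l * Y w|) <=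
         c * (Y w ^+ 2 * Num.min 1 `|x * Y w / s|).
    rewrite /c.
    have ly : 0 <= l ^+ 2 * Y w ^+ 2 by rewrite mulr_ge0 ?sqr_ge0.
    apply: le_trans (_ : 10 * (l ^+ 2 * Y w ^+ 2 * (2 * q * Num.min 1 `|x * Y w / s|)) <= _).
      by apply: ler_wpM2l => //; apply: ler_wpM2l.
    by rewrite le_eqVlt; apply/orP; left; apply/eqP; ring.
  move=> h; have -> : 1 + l * Y w - l ^+ 2 * Y w ^+ 2 / 2 +
      10 * (l ^+ 2 * Y w ^+ 2 * Num.min 1 `|l * Y w|) =
      l * Y w + (1 + (l ^+ 2 / 2 * - Y w ^+ 2)) + 10 * (l ^+ 2 * Y w ^+ 2 * Num.min 1 `|l * Y w|) by ring.
  by rewrite !addrA; apply: lerD.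
have e1 : (E (fun w => phiL l (Y w)) <= E (fun w => (l * Y w + Z w)%R))%E.
  by apply: sl_mono => //; apply: H_add.
have eW : (E W <= (l ^+ 2 / 2 * fine (E (fun w => (- (Y w ^+ 2))%R)) + c * fine (E rho))%:E)%E.
  have := @E_subadd_r _ _ S (fun w => l ^+ 2 / 2 * (- (Y w ^+ 2))) (fun w => c * rho w) (H_scal _ hn) (H_scal _ hr).
  rewrite !E_scale //; last by rewrite mulr_ge0 ?sqr_ge0.
  rewrite fin_numM // => /(_ isT) h; apply: le_trans h _.
  by rewrite -(fineK fn) -(fineK fr) /= -!EFinM -EFinD.
have eZ : (E Z <= (1 + (l ^+ 2 / 2 * fine (E (fun w => (- (Y w ^+ 2))%R)) + c * fine (E rho)))%:E)%E.
  have := @E_subadd_l _ _ S (fun _ => 1) W (H_cst _ _) hW.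
  rewrite sl_cst => /(_ isT) h; apply: le_trans h _.
  by rewrite EFinD leeD2l.
have e3 : (E (fun w => (l * Y w)%R) <= 0)%E.
  by rewrite (E_scale hY (ltW l0)) pmule_rle0 ?lte_fin.
have e2 : (E (fun w => (l * Y w + Z w)%R) <= E (fun w => (l * Y w)%R) + E Z)%E.
  apply: sl_subadd => //.
    by move=> [h _]; move: e3; rewrite h.
  by move=> [_ h]; move: eZ; rewrite h.
have : (E (fun w => phiL l (Y w)) <= (1 + (l ^+ 2 / 2 * fine (E (fun w => (- (Y w ^+ 2))%R)) + c * fine (E rho)))%:E)%E.
  apply: le_trans e1 _; apply: le_trans e2 _.
  apply: le_trans (_ : (0 + E Z <= _)%E); first by apply: leeD.
  by rewrite add0e.
rewrite -(fineK fphi) lee_fin /lower_E fineN.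
move=> h; apply: le_trans h _.
by rewrite le_eqVlt; apply/orP; left; apply/eqP; rewrite /c; ring.
Qed.
Lemma phi_row (l : R) i (x : 'rV[R]_i) (y : R) :
  \prod_(j < i + 1) phiL l ((row_mx x (\row_(j0 < 1) y)) 0 j) =
  (\prod_(j < i) phiL l (x 0 j)) * phiL l y.
Proof.
rewrite big_split_ord /= big_ord1; congr (_ * _).
  by apply: eq_bigr => j _; rewrite row_mxEl.
by rewrite row_mxEr mxE.
Qed.

Lemma H_prodP (X : nat -> Omega -> R) (l : R) p : 0 < l ->
  (forall k, (1 <= k)%N -> sl_H S (X k)) ->
  sl_H S (fun w => \prod_(j < p) phiL l (X j.+1 w)).
Proof.
move=> l0 hX.
rewrite (_ : (fun w => _) = compose_rv (fun z : 'rV[R]_p => \prod_(j < p) phiL l (z 0 j)) (fun j : 'I_p => X j.+1)).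
  apply: sl_Hcomp; first by move=> j; apply: hX.
  right; apply: (@lip_prod _ (phiL l) (4/3) (4/3 * (l + l ^+ 2))) => //.
  - lra.
  - by apply: mulr_ge0; [lra | apply: addr_ge0; [exact: ltW | exact: sqr_ge0]].
  - exact: phiL_bnd.
  - by move=> a b; apply: phiL_lip; exact: ltW.
apply/funext => w; rewrite /compose_rv; apply: eq_bigr => j _; by rewrite mxE.
Qed.

Lemma prod_E (X : nat -> Omega -> R) (l : R) : 0 < l ->
  (forall k, (1 <= k)%N -> sl_H S (X k)) -> indep_seq S X ->
  forall i, E (fun w => \prod_(j < i) phiL l (X j.+1 w)) =
    (\prod_(j < i) fine (E (fun w => phiL l (X j.+1 w))))%:E.
Proof.
move=> l0 hX hind.
have hP : forall k, (1 <= k)%N -> sl_H S (fun w => phiL l (X k w)).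
  move=> k hk; exact: (H_phiL (ltW l0) (hX k hk)).
have fP : forall k, (1 <= k)%N -> E (fun w => phiL l (X k w)) \is a fin_num.
  by move=> k hk; apply: (@E_bnd_fin _ _ S _ 0 (4/3)); [exact: hP | move=> w; exact: phiL_bnd].
elim=> [|i IH].
  rewrite big_ord0 (_ : (fun w => _) = fun _ => 1); first exact: sl_cst.
  by apply/funext => w; rewrite big_ord0.
case: i IH => [|i] IH.
  rewrite big_ord1 (_ : (fun w => _) = fun w => phiL l (X 1%N w)); first by rewrite fineK // fP.
  by apply/funext => w; rewrite big_ord1.
set Y := X i.+2.
have hI := hind i.+1 isT.
set e := fine (E (fun w => phiL l (Y w))).
have fe : E (fun w => phiL l (Y w)) = e%:E by rewrite fineK // fP.
have e0 : 0 <= e.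
  rewrite /e; apply: fine_ge0; apply: E_ge0; first exact: hP.
  by move=> w; case/andP: (phiL_bnd l (Y w)).
have hlip : loc_lip_poly (fun z : 'rV[R]_(i.+1 + 1) => \prod_(j < i.+1 + 1) phiL l (z 0 j)).
  apply: (@lip_prod _ (phiL l) (4/3) (4/3 * (l + l ^+ 2))) => //.
  - lra.
  - by apply: mulr_ge0; [lra | apply: addr_ge0; [exact: ltW | exact: sqr_ge0]].
  - exact: phiL_bnd.
  - by move=> a b; apply: phiL_lip; exact: ltW.
have hpsi : forall x : 'rV[R]_i.+1,
  E (fun w => \prod_(j < i.+1 + 1) phiL l (row_mx x (\row_(j0 < 1) X i.+2 w) 0 j)) =
  ((\prod_(j < i.+1) phiL l (x 0 j)) * e)%:E.
  move=> x.
  rewrite (_ : (fun w => _) = fun w => (\prod_(j < i.+1) phiL l (x 0 j)) * phiL l (Y w)).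
    rewrite E_scale; first by rewrite fe EFinM.
      exact: hP.
    by apply: prodr_ge0 => j _; case/andP: (phiL_bnd l (x 0 j)).
  by apply/funext => w; rewrite phi_row.
have eqf : (fun w => fine (E (fun w0 => \prod_(j < i.+1 + 1) phiL l
                 (row_mx (\row_(i0 < i.+1) X i0.+1 w) (\row_(j0 < 1) X i.+2 w0) 0 j)))) =
           (fun w => e * \prod_(j < i.+1) phiL l (X j.+1 w)).
  apply/funext => w; rewrite hpsi /= mulrC; congr (_ * _).
  by apply: eq_bigr => j _; rewrite mxE.
have eqg : (fun w => \prod_(j < i.+1 + 1) phiL l
                 (row_mx (\row_(i0 < i.+1) X i0.+1 w) (\row_(j0 < 1) X i.+2 w) 0 j)) =
           (fun w => \prod_(j < i.+2) phiL l (X j.+1 w)).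
  apply/funext => w; rewrite phi_row [in RHS]big_ord_recr /=; congr (_ * _).
  by apply: eq_bigr => j _; rewrite mxE.
have hPi : sl_H S (fun w => \prod_(j < i.+1) phiL l (X j.+1 w)) by exact: H_prodP.
have := hI _ hlip; rewrite /= eqf eqg.
rewrite (E_scale hPi e0).
rewrite IH => -> //.
- by rewrite [in RHS]big_ord_recr /= EFinM muleC.
- by move=> x; rewrite hpsi.
Qed.
End PB.

Unset Implicit Arguments. Set Strict Implicit.
Lemma shift_big (T : Type) (idx : T) (op : T -> T -> T) (F : nat -> T) n :
  \big[op/idx]_(j < n) F j.+1 = \big[op/idx]_(1 <= k < n.+1) F k.
Proof. by rewrite big_add1 /= big_mkord. Qed.

Theorem proposition6p2 (R : realType) :
  exists C : R,
  forall (Omega : Type) (S : sublinear_space R Omega) (X : nat -> Omega -> R)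
         (n : nat) (delta x : R),
    (forall k, (1 <= k)%N -> sl_H S (X k)) ->
    indep_seq S X ->
    (forall k, (1 <= k)%N -> (sl_E S (fun w => (X k w ^+ 2)%R) < +oo)%E) ->
    (forall k, (1 <= k)%N -> (sl_E S (X k) <= 0)%E) ->
    let Sn := fun w => \sum_(1 <= k < n.+1) X k w in
    let Vn := fun w => Num.sqrt (\sum_(1 <= k < n.+1) X k w ^+ 2) in
    let Bbar2 := \sum_(1 <= k < n.+1) fine (sl_E S (fun w => X k w ^+ 2)) in
    let Bund2 := \sum_(1 <= k < n.+1) fine (lower_E S (fun w => X k w ^+ 2)) in
    let qn := Bbar2 / Bund2 in
    let Delta := Bbar2^-1 * \sum_(1 <= k < n.+1)
          fine (sl_E S (fun w => X k w ^+ 2 *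
                   Num.min 1 `|x * X k w / Num.sqrt Bbar2|)) in
    0 < Bund2 ->
    0 < delta -> delta <= 4^-1 * (Bund2 / Bbar2) ->
    2 <= x ->
    (capV S [set w | (x * Vn w <= Sn w)%R /\ (Vn w ^+ 2 <= delta * Bbar2)%R]
       <= (expR (- 2 * x ^+ 2 + C * x ^+ 2 * qn ^+ 3 * Delta))%:E)%E.
Proof.
exists 80 => Omega S X n delta x hH hind hsq hE Sn Vn B b q Delta hb hd hdel hx.
pose u k := fine (sl_E S (fun w => X k w ^+ 2)).
pose lo k := fine (lower_E S (fun w => X k w ^+ 2)).
pose r k := fine (sl_E S (fun w => X k w ^+ 2 * Num.min 1 `|x * X k w / Num.sqrt B|)).
have lou : forall k, (1 <= k)%N -> lo k <= u k.
  move=> k hk; have [_ h] := fin_negsq (hH k hk) (hsq k hk).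
  by rewrite /lo /u /lower_E fineN; lra.
have r0 : forall k, (1 <= k)%N -> 0 <= r k.
  move=> k hk; rewrite /r; apply: fine_ge0; apply: E_ge0; first exact: (H_rho _ _ (hH k hk)).
  move=> w; rewrite mulr_ge0 ?sqr_ge0 //.
have bB : b <= B.
  by rewrite /b /B big_nat_cond [X in _ <= X]big_nat_cond; apply: ler_sum => k /andP[/andP[hk _] _]; exact: lou.
have hB : 0 < B by apply: lt_le_trans bB.
have q1 : 1 <= q by rewrite /q ler_pdivlMr // mul1r.
have x0 : 0 < x by apply: lt_le_trans hx; lra.
set sb := Num.sqrt b; set sB := Num.sqrt B.
have sb0 : 0 < sb by rewrite sqrtr_gt0.
have sbB : sb <= sB by rewrite ler_sqrt // ltW.
have sb2 : sb ^+ 2 = b by rewrite sqr_sqrtr // ltW.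
have sB2 : sB ^+ 2 = B by rewrite sqr_sqrtr // ltW.
pose l := 2 * x / sb.
have l0 : 0 < l by rewrite /l divr_gt0 // mulr_gt0.
have l2 : l ^+ 2 = 4 * x ^+ 2 / b by rewrite /l -sb2; field; rewrite gt_eqF.
have hmin : forall a : R, Num.min 1 `|l * a| <= 2 * q * Num.min 1 `|x * a / Num.sqrt B|.
  move=> a.
  have m1 : Num.min 1 `|l * a| <= 1 by have [h|h] := leP `|l * a| 1 => //; exact: ltW.
  have m2 : Num.min 1 `|l * a| <= `|l * a| by have [h|h] := leP `|l * a| 1 => //; exact: ltW.
  have [h|h] := leP `|x * a / Num.sqrt B| 1; last by apply: le_trans m1 _; lra.
  apply: le_trans m2 _.
  rewrite -/sB /l !normrM (ger0_norm (ltW x0)) normrV ?unitfE ?gt_eqF ?sqrtr_gt0 //.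
  rewrite (ger0_norm (ltW sb0)) ?(ger0_norm (sqrtr_ge0 B)) ?(ger0_norm (sqrtr_ge0 _)) //.
  have sB0 : 0 < sB by apply: lt_le_trans sbB.
  rewrite normr_nat (ger0_norm (ltW (_ : 0 < sB^-1))); last by rewrite invr_gt0.
  have -> : 2 * q * (x * `|a| * sB^-1) = 2 * x / sb * `|a| * (sB / sb).
    rewrite /q -sB2 -sb2; field; by rewrite !gt_eqF.
  apply: ler_peMr; first by rewrite mulr_ge0 // divr_ge0 // ?mulr_ge0 // ltW.
  by rewrite ler_pdivlMr // mul1r.
have q0 : 0 <= q by lra.
have kb : forall k, (1 <= k)%N ->
    fine (sl_E S (fun w => phiL l (X k w))) <= 1 - l ^+ 2 / 2 * lo k + 20 * q * l ^+ 2 * r k.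
  by move=> k hk; exact: (per_bound (hH k hk) (hsq k hk) (hE k hk) l0 q0 hmin).
pose xi := fun w => \prod_(j < n) phiL l (X j.+1 w).
have hxi : sl_H S xi by exact: H_prodP.
have Exi := prod_E l0 hH hind n.
set A := [set w | (x * Vn w <= Sn w)%R /\ (Vn w ^+ 2 <= delta * B)%R].
have dom : forall w, \1_A w <= xi w.
  move=> w; rewrite indicE.
  have [hw|hw] := boolP (w \in A); last first.
    by rewrite /= /xi; apply: prodr_ge0 => j _; case/andP: (phiL_bnd l (X j.+1 w)).
  rewrite /=; move: hw; rewrite inE => -[h1 h2].
  have ex : xi w = expR (l * Sn w - l ^+ 2 * Vn w ^+ 2).
    rewrite /xi /phiL -expR_sum; congr expR.
    rewrite sqr_sqrtr; last by apply: sumr_ge0 => k _; exact: sqr_ge0.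
    rewrite big_split /= -mulr_sumr sumrN -mulr_sumr.
    by rewrite (shift_big _ _ _ (fun k => X k w)) (shift_big _ _ _ (fun k => X k w ^+ 2)).
  rewrite ex -expR0 ler_expR.
  have V0 : 0 <= Vn w by exact: sqrtr_ge0.
  have hv : Vn w ^+ 2 <= b / 4.
    apply: le_trans h2 _.
    have := ler_wpM2r (ltW hB) hdel.
    by move=> h; apply: le_trans h _; rewrite le_eqVlt; apply/orP; left; apply/eqP; field; rewrite gt_eqF.
  have lv2 : (l * Vn w) ^+ 2 <= x ^+ 2.
    rewrite exprMn l2 mulrAC ler_pdivrMr //.
    have := sqr_ge0 x; nra.
  have lv0 : 0 <= l * Vn w by rewrite mulr_ge0 // ltW.
  have lv : l * Vn w <= x by nra.
  have : l * (x * Vn w) <= l * Sn w by apply: ler_wpM2l => //; exact: ltW.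
  rewrite subr_ge0; nra.
have cap : (capV S A <= sl_E S xi)%E.
  apply: ereal_inf_lbound; exists xi => //; split => //.
apply: le_trans cap _; rewrite Exi lee_fin.
pose z k := - (l ^+ 2 / 2) * lo k + 20 * q * l ^+ 2 * r k.
apply: le_trans (_ : \prod_(j < n) expR (z j.+1) <= _).
  apply: ler_prod => j _; apply/andP; split.
    apply: fine_ge0; apply: E_ge0; first exact: H_phiL (ltW l0) (hH _ _).
    by move=> w; case/andP: (phiL_bnd l (X j.+1 w)).
  apply: le_trans; first exact: kb.
  have := expR_ge1Dx (z j.+1); rewrite /z; lra.
rewrite -expR_sum ler_expR (shift_big _ _ _ z) /z big_split /= -!mulr_sumr.
set Sr := \sum_(1 <= k < n.+1) r k.
have hb' : \sum_(1 <= k < n.+1) lo k = b by [].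
rewrite hb'.
have hD : Delta = B^-1 * Sr by [].
have Sr0 : 0 <= Sr by rewrite /Sr big_nat_cond; apply: sumr_ge0 => k /andP[/andP[hk _] _]; exact: r0.
have e1 : - (l ^+ 2 / 2) * b = - 2 * x ^+ 2 by rewrite l2; field; rewrite gt_eqF.
have e2 : 20 * q * l ^+ 2 * Sr = 80 * x ^+ 2 * q ^+ 2 * Delta.
  by rewrite hD l2 /q; field; rewrite !gt_eqF.
rewrite e1 e2 lerD2l.
have D0 : 0 <= Delta by rewrite hD mulr_ge0 // invr_ge0 ltW.
have xx : 0 <= 80 * x ^+ 2 * Delta by apply: mulr_ge0 => //; apply: mulr_ge0 => //; exact: sqr_ge0.
have qq : q ^+ 2 <= q ^+ 3 by rewrite exprS; apply: ler_peMl => //; exact: sqr_ge0.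
nra.
Qed.
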